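(* Let $G_1$ be a group and $k\ge1$ an integer such that $|G_1:C_{G_1}(a)|\le k$ for every $a\in G_1$. Let $n,m\ge0$, let $G\le G_1^n$ be a subgroup, and let $\mu$ be a left-invariant probability measure on some algebra of subsets of $G$, with inner measure $\mu_*$. Let $w(\bar x,\bar y)$ be a group word in the variables $\bar x=(x_1,\dots,x_n)$, $\bar y=(y_1,\dots,y_m)$ and their inverses, and let $\bar g\in G_1^m$, $c\in G_1$. If $w(\bar h,\bar g)=c$ does not hold for all $\bar h\in G$, then $$\mu_*(\{\bar h\in G:w(\bar h,\bar g)=c\})\le1-\frac1{2k^{n^2+mn}}.$$
   Context: The inner measure is $\mu_*(X)=\sup\{\mu(Y):Y\subseteq X\text{ measurable}\}$. *)

(* Defs.v *)
From HB Require Import structures.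
From mathcomp Require Import all_boot all_order all_algebra.
From mathcomp Require Import monoid.
From mathcomp Require Import boolp classical_sets reals.

Set Implicit Arguments.
Unset Strict Implicit.
Unset Printing Implicit Defensive.

Import Order.TTheory GRing.Theory Num.Theory.
Local Open Scope classical_set_scope.

Section Defs.
Variable G1 : groupType.

Definition in_centralizer (a x : G1) : Prop := (x * a = a * x)%g.

(** [|G1 : C_{G1}(a)| <= k]: the left cosets of [C_{G1}(a)] can be listed
    by (at most) [k] representatives, i.e. every [x] lies in some coset
    [t i * C_{G1}(a)]. *)
Definition centralizer_index_le (k : nat) (a : G1) : Prop :=
  exists t : 'I_k -> G1, forall x : G1,
    exists i : 'I_k, in_centralizer a ((t i)^-1 * x)%g.

Definition is_subgroup_pow (n : nat) (G : set ('I_n -> G1)) : Prop :=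
  [/\ G (fun _ => 1%g),
      (forall h h', G h -> G h' -> G (fun i => h i * h' i)%g) &
      (forall h, G h -> G (fun i => (h i)^-1)%g)].

Definition ltrans (n : nat) (g : 'I_n -> G1) (X : set ('I_n -> G1)) :
  set ('I_n -> G1) := [set (fun i => g i * h i)%g | h in X].

(** Group words in the variables x_1..x_n (inl), y_1..y_m (inr) and their
    inverses: a letter is (variable, inverted?). *)
Definition word (n m : nat) := seq (('I_n + 'I_m) * bool).

Definition eval_word (n m : nat) (w : word n m) (h : 'I_n -> G1)
    (g : 'I_m -> G1) : G1 :=
  foldr (fun l acc =>
     let v := match l.1 with inl i => h i | inr j => g j end in
     ((if l.2 then v^-1 else v) * acc)%g) 1%g w.
End Defs.

Section Measure.
Variable R : realType.
Local Open Scope ring_scope.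

(** [mu] is a (finitely additive) left-invariant probability measure on the
    algebra [A] of subsets of [G] (subsets of [G] are modelled as subsets of
    the ambient [G1^n] contained in [G]; complements are taken in [G]). *)
Record left_inv_prob_measure (G1 : groupType) (n : nat)
    (G : set ('I_n -> G1)) (A : set (set ('I_n -> G1)))
    (mu : set ('I_n -> G1) -> R) : Prop := {
  alg_sub : forall X, A X -> X `<=` G;
  alg_set0 : A set0;
  alg_setT : A G;
  alg_compl : forall X, A X -> A (G `\` X);
  alg_union : forall X Y, A X -> A Y -> A (X `|` Y);
  alg_ltrans : forall g X, G g -> A X -> A (ltrans g X);
  mu_ge0 : forall X, A X -> 0 <= mu X;
  mu_additive : forall X Y, A X -> A Y -> X `&` Y = set0 ->
                  mu (X `|` Y) = mu X + mu Y;
  mu_total : mu G = 1;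
  mu_linv : forall g X, G g -> A X -> mu (ltrans g X) = mu X
}.

Definition inner_measure (T : Type) (A : set (set T)) (mu : set T -> R)
    (X : set T) : R :=
  sup [set r | exists Y, [/\ A Y, Y `<=` X & mu Y = r]].
End Measure.

(* Main.v *)
Require Import Defs.
From HB Require Import structures.
From mathcomp Require Import all_boot all_order all_algebra.
From mathcomp Require Import monoid.
From mathcomp Require Import boolp classical_sets reals.
From mathcomp Require Import lra.

Set Implicit Arguments.
Unset Strict Implicit.
Unset Printing Implicit Defensive.
Import Order.TTheory GRing.Theory Num.Theory.

Section Grp.
Variable G1 : groupType.
Local Open Scope group_scope.

Lemma commVl (x y : G1) : commute x y -> commute x^-1 y.
Proof. by move=> h; apply: commute_sym; apply: commuteV; apply: commute_sym. Qed.

Lemma centrV (e x y : G1) : in_centralizer e x -> in_centralizer e y ->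
  in_centralizer e (x^-1 * y).
Proof.
move=> hx hy; rewrite /in_centralizer; apply: commute_sym.
apply: commuteM; apply: commute_sym => //; exact: commVl.
Qed.

Lemma comm_word n m (z : G1) (w : word n m) a g :
  (forall j, commute z (a j)) -> (forall j, commute z (g j)) ->
  commute z (eval_word w a g).
Proof.
move=> ha hg; elim: w => [|[v b] w IH] /=; first exact: commute1.
rewrite /eval_word /=; apply: commuteM => //.
case: v => j; case: b => //; apply: commuteV => //.
Qed.

Lemma eval_split n m (w : word n m) (a u : 'I_n -> G1) g :
  (forall i j, commute (u i) (a j)) -> (forall i j, commute (u i) (g j)) ->
  eval_word w (fun i => a i * u i) g =
  eval_word w a g * eval_word w u (fun _ => 1).
Proof.
move=> ha hg; elim: w => [|[v b] w IH]; first by rewrite /eval_word /= mulg1.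
rewrite /eval_word /= -!/(eval_word _ _ _) IH.
case: v => [i|j] /=.
  have hc : commute (if b then (u i)^-1 else u i) (eval_word w a g).
    apply: comm_word => j.
      by case: b; [apply: commVl|]; apply: ha.
    by case: b; [apply: commVl|]; apply: hg.
  have -> : (if b then (a i * u i)^-1 else a i * u i) =
            (if b then (a i)^-1 else a i) * (if b then (u i)^-1 else u i).
    move: hc; case: b => // _; rewrite invgM.
    by apply: commVl; apply: commuteV; apply: ha.
  by rewrite !mulgA -[X in X * _ = _]mulgA hc mulgA.
by case: b; rewrite ?invg1 mul1g mulgA.
Qed.
End Grp.

Section Meas.
Variables (R : realType) (G1 : groupType) (n : nat) (G : set ('I_n -> G1))
  (A : set (set ('I_n -> G1))) (mu : set ('I_n -> G1) -> R).
Hypothesis hmu : left_inv_prob_measure G A mu.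
Local Open Scope classical_set_scope.
Local Open Scope ring_scope.

Lemma AI X Y : A X -> A Y -> A (X `&` Y).
Proof.
move=> hX hY.
have -> : X `&` Y = G `\` ((G `\` X) `|` (G `\` Y)).
  rewrite setDUr !setDD; apply/seteqP; split => x.
    by move=> [xX xY]; have := alg_sub hmu hX xX.
  by case=> [[_ ?] [_ ?]].
exact: (alg_compl hmu (alg_union hmu (alg_compl hmu hX) (alg_compl hmu hY))).
Qed.

Lemma mu0 : mu set0 = 0.
Proof.
have := mu_additive hmu (alg_set0 hmu) (alg_set0 hmu) (setI0 _).
rewrite setU0 => h; lra.
Qed.

Lemma mu_le X Y : A X -> A Y -> X `<=` Y -> mu X <= mu Y.
Proof.
move=> hX hY hXY.
have hD : A (Y `&` (G `\` X)) by apply: AI => //; exact: (alg_compl hmu hX).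
have e : Y = X `|` (Y `&` (G `\` X)).
  apply/seteqP; split => x.
    move=> yx; have [xX|nX] := pselect (X x); [by left|right].
    by split => //; split => //; apply: (alg_sub hmu hY).
  by case => [/hXY|[]].
have d : X `&` (Y `&` (G `\` X)) = set0.
  by apply/seteqP; split => x // [xX [_ [_]]].
rewrite [in X in _ <= X]e (mu_additive hmu hX hD d).
have := mu_ge0 hmu hD; lra.
Qed.

Lemma mu_subadd X Y : A X -> A Y -> mu (X `|` Y) <= mu X + mu Y.
Proof.
move=> hX hY.
have hD : A (Y `&` (G `\` X)) by apply: AI => //; exact: (alg_compl hmu hX).
have e : X `|` Y = X `|` (Y `&` (G `\` X)).
  apply/seteqP; split => x.
    case=> [|yx]; [by left|]; have [xX|nX] := pselect (X x); [by left|right].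
    by split => //; split => //; apply: (alg_sub hmu hY).
  by case => [|[]]; [left|right].
have d : X `&` (Y `&` (G `\` X)) = set0.
  by apply/seteqP; split => x // [xX [_ [_]]].
rewrite e (mu_additive hmu hX hD d).
have := mu_le hD hY (fun x => @proj1 _ _); lra.
Qed.

Lemma mu_compl Y : A Y -> mu (G `\` Y) = 1 - mu Y.
Proof.
move=> hY.
have := mu_additive hmu hY (alg_compl hmu hY) (setDIK _ _).
have hYG := alg_sub hmu hY; rewrite setDUK //.
rewrite (mu_total hmu); lra.
Qed.

Definition Ucov (T : Type) (F : T -> 'I_n -> G1) (Z : set ('I_n -> G1))
  (l : seq T) := foldr (fun x acc => ltrans (F x) Z `|` acc) set0 l.

Lemma Ucov_bound (T : Type) (F : T -> 'I_n -> G1) Z l :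
  (forall x, G (F x)) -> A Z ->
  A (Ucov F Z l) /\ mu (Ucov F Z l) <= (size l)%:R * mu Z.
Proof.
move=> hF hZ; elim: l => [|x l [hA hle]] /=.
  by rewrite mu0 mul0r; split => //; exact: (alg_set0 hmu).
have hT := alg_ltrans hmu (hF x) hZ.
split; first exact: (alg_union hmu hT hA).
apply: le_trans (mu_subadd hT hA) _.
rewrite (mu_linv hmu (hF x) hZ) -add1n natrD mulrDl mul1r.
by rewrite lerD2l.
Qed.

Lemma Ucov_mem (T : eqType) (F : T -> 'I_n -> G1) Z l x h :
  x \in l -> ltrans (F x) Z h -> Ucov F Z l h.
Proof.
elim: l => [|y l IH] //=; rewrite inE => /orP[/eqP <- hh|/IH hh]; first by left.
by right; apply: hh.
Qed.

Lemma cover_bound (T : Type) (F : T -> 'I_n -> G1) l Y :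
  (forall x, G (F x)) -> A Y -> (0 < size l)%N ->
  G `<=` Ucov F (G `\` Y) l -> mu Y <= 1 - (size l)%:R^-1.
Proof.
move=> hF hY hl hcov.
have [hU hle] := Ucov_bound l hF (alg_compl hmu hY).
have h1 : 1 <= mu (Ucov F (G `\` Y) l).
  by rewrite -(mu_total hmu); apply: mu_le => //; exact: (alg_setT hmu).
rewrite mu_compl // in hle.
have hM : 0 < (size l)%:R :> R by rewrite ltr0n.
have : (size l)%:R^-1 <= 1 - mu Y.
  rewrite -[_^-1]mul1r ler_pdivrMr //.
  by rewrite mulrC; apply: le_trans hle.
lra.
Qed.
End Meas.

Theorem corollary3p4 (R : realType) (G1 : groupType) (k : nat)
  (hk : (1 <= k)%N)
  (hBFC : forall a : G1, centralizer_index_le k a)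
  (n m : nat) (G : set ('I_n -> G1)) (hG : is_subgroup_pow G)
  (A : set (set ('I_n -> G1))) (mu : set ('I_n -> G1) -> R)
  (hmu : left_inv_prob_measure G A mu)
  (w : word n m) (g : 'I_m -> G1) (c : G1)
  (hnot : ~ (forall h, G h -> eval_word w h g = c)) :
  (inner_measure A mu [set h | G h /\ eval_word w h g = c]
     <= 1 - (2 * (k ^ (n * n + m * n))%:R)^-1)%R.
Proof.
set S := [set h | G h /\ eval_word w h g = c]%classic.
set M := (2 * k ^ (n * n + m * n))%N.
have hM : (0 < M)%N by rewrite /M muln_gt0 expn_gt0 hk.
have eM : (2 * (k ^ (n * n + m * n))%:R = M%:R :> R)%R by rewrite /M natrM.
rewrite eM.
have key : forall Y, A Y -> (Y `<=` S)%classic -> (mu Y <= 1 - M%:R^-1)%R.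
  move=> Y hY hYS.
  case: (pselect (exists b, G b /\ eval_word w b g <> eval_word w (fun _ => 1%g) g))
    => [[b [Gb hb]]|nob].
    case: hG => G1' Gmul Ginv.
    pose T a := proj1_sig (cid (hBFC a)).
    have hT : forall a x, exists i, in_centralizer a ((T a i)^-1 * x)%g.
      by move=> a; exact: (proj2_sig (cid (hBFC a))).
    pose I a x := proj1_sig (cid (hT a x)).
    have hI : forall a x, in_centralizer a ((T a (I a x))^-1 * x)%g.
      by move=> a x; exact: (proj2_sig (cid (hT a x))).
    pose elt (l : 'I_n + 'I_m) := match l with inl j => b j | inr j => g j end.
    pose FT := {ffun 'I_n * ('I_n + 'I_m) -> 'I_k}.
    pose fidx (h : 'I_n -> G1) : FT := [ffun p => I (elt p.2) (h p.1)].
    have hrep : forall phi : FT, exists r, G r /\ (forall h, G h -> fidx h = phi -> fidx r = phi).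
      move=> phi; case: (pselect (exists h, G h /\ fidx h = phi)) => [[h [Gh e]]|ne].
        by exists h.
      exists (fun _ => 1%g); split => // h Gh e; exfalso; apply: ne; by exists h.
    have [rep hrep'] := choice hrep.
    pose F (x : FT * bool) : 'I_n -> G1 :=
      if x.2 then rep x.1 else (fun i => rep x.1 i * (b i)^-1)%g.
    have hF : forall x, G (F x).
      move=> [phi []]; rewrite /F /=; have [Gr _] := hrep' phi => //.
      by apply: Gmul => //; apply: Ginv.
    have := cover_bound hmu (l := enum {: FT * bool}) hF hY.
    have -> : size (enum {: FT * bool}) = M.
      rewrite -cardE card_prod card_ffun card_prod card_sum !card_ord card_bool.
      by rewrite /M mulnC mulnDr [(m * n)%N]mulnC.
    apply => // h Gh.
    pose r := rep (fidx h).
    have [Gr hr] := hrep' (fidx h).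
    have fr := hr h Gh erefl.
    pose u := fun i => ((r i)^-1 * h i)%g.
    have Gu : G u by apply: Gmul => //; apply: Ginv.
    have cu : forall i l, commute (u i) (elt l).
      move=> i l; have h1 := hI (elt l) (r i); have h2 := hI (elt l) (h i).
      have e : I (elt l) (r i) = I (elt l) (h i).
        by have := congr1 (fun f : FT => f (i, l)) fr; rewrite !ffunE.
      rewrite e in h1; have := centrV h1 h2.
      by rewrite invgM invgK -mulgA mulVKg.
    have su := @eval_split _ _ _ w (fun _ => 1%g) u g
      (fun i j => commute1 (u i)) (fun i j => cu i (inr j)).
    have sb := @eval_split _ _ _ w b u g
      (fun i j => cu i (inl j)) (fun i j => cu i (inr j)).
    have eu : (fun i => 1 * u i)%g = u by apply: funext => i; rewrite mul1g.
    rewrite eu in su.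
    have hru : (fun i => r i * u i)%g = h by apply: funext => i; rewrite mulVKg.
    case: (pselect (eval_word w u g = c)) => hcu.
      have hbu : eval_word w (fun i => b i * u i)%g g <> c.
        move=> hbu; apply: hb; apply: (@mulIg _ (eval_word w u (fun _ => 1%g))).
        by rewrite -sb -su hbu hcu.
      apply: (Ucov_mem (x := (fidx h, false))); first by rewrite mem_enum.
      exists (fun i => b i * u i)%g.
        split; first by apply: Gmul.
        by move=> /hYS [].
      rewrite /F /=; apply: funext => i.
      by rewrite -mulgA mulKg; exact: (congr1 (fun f => f i) hru).
    apply: (Ucov_mem (x := (fidx h, true))); first by rewrite mem_enum.
    exists u; last by rewrite /F /= hru.
    split => //; by move=> /hYS [].
  have Y0 : Y = set0.
    apply/seteqP; split=> h //= Yh.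
    have [Gh hc] := hYS h Yh.
    have e1 : forall x, G x -> eval_word w x g = eval_word w (fun _ => 1%g) g.
      move=> x Gx; case: (pselect (eval_word w x g = eval_word w (fun _ => 1%g) g)) => // ne.
      by exfalso; apply: nob; exists x.
    apply: hnot => h' Gh'; by rewrite e1 // -(e1 h).
  rewrite Y0 (mu0 hmu) subr_ge0 invf_le1 ?ltr0n // ler1n //.
rewrite /inner_measure; apply: ge_sup.
  exists 0%R; exists set0; split => //; [exact: (alg_set0 hmu)|exact: (mu0 hmu)].
by move=> r [Y [hY hYS <-]]; exact: key.
Qed.
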